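(* Every projection of a sunword is a sunword; that is, the class of sunwords is closed under projection.
   Context: Multisuns: a multisun is a graph with no induced $K_4$ minus an edge, of odd order, whose maximal cliques of size $2$ form a Hamiltonian cycle $C$ (the rim); the other maximal cliques consist of pairwise nonconsecutive vertices of $C$ (inscribed cliques). A sub-multisun deletes the edge sets of some, but not all, inscribed cliques. An $AB$-path (inscribed cliques $A,B$, possibly equal) is a subpath of $C$ with one end in $A$, the other in $B$, internal vertices in no inscribed clique; $A$-path $=AA$-path; for $v\in B$ an $Av$-path is an $AB$-path ending at $v$ in $B$. N-conditions: (N1) every $A$-path has an even number $\ge4$ of vertices; (N2) inscribed cliques have odd size; (N3) all inscribed cliques share a vertex $\xi\in V(C)$ and are otherwise disjoint; (N4) every $A\xi$-path has an even number of vertices; (N5) for $A\ne B$ every $AB$-path has an odd number of vertices. A sunoid is a multisun such that it and all its sub-multisuns satisfy the N-conditions. Words: alphabet $\Sigma$ with distinguished letter $\epsilon$; the pattern $\pi(w)$ is obtained by repeatedly deleting $\epsilon\epsilon$; $v\sim w$ if related by cyclic shift and/or reversal; $u\approx v$ iff $\pi(u)\sim\pi(v)$; $[w]$ is the class (cyclic word). For a multisun satisfying the N-conditions, label rim vertices by $\sigma$ (in $\ge2$ inscribed cliques), a letter specific to $X$ (only in inscribed clique $X$), or $\epsilon$ (in none); reading around the rim gives $w_G$, and $[w_G]$ is its s-word. Letters other than $\epsilon,\sigma$ are proper letters. A sunword is the s-word of a sunoid. Projection: let $W=[w]$ be an s-word whose alphabet $\Sigma$ contains $p\ge2$ proper letters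 (so $\sigma\in\Sigma$), and let $\{x_1,\dots,x_q\}$ be proper letters with $q<p$. The word $w|_{x_1=\epsilon,\dots,x_q=\epsilon}$ is obtained from $w$ by replacing every occurrence of $x_1,\dots,x_q$ by $\epsilon$, and, if $q=p-1$, additionally replacing $\sigma$ by the unique remaining proper letter. The projection of $W$ on $\Sigma\setminus\{x_1,\dots,x_q\}$ is $W|_{x_1=\epsilon,\dots,x_q=\epsilon}=[w|_{x_1=\epsilon,\dots,x_q=\epsilon}]$ (independent of the representative). Projection is not defined for s-words with a single proper letter. *)

(* Defs.v *)
From mathcomp Require Import all_boot.
Set Implicit Arguments. Unset Strict Implicit. Unset Printing Implicit Defensive.

Section Graph.
Variables (V : finType) (adj : rel V).

Definition clique (K : {set V}) : bool :=
  [forall u in K, forall v in K, (u != v) ==> adj u v].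

Definition maxclique (K : {set V}) : bool :=
  clique K && [forall K' : {set V}, (K \proper K') ==> ~~ clique K'].

Definition rim_edge (K : {set V}) : bool := maxclique K && (#|K| == 2).

Definition inscribed : {set {set V}} :=
  [set K : {set V} | maxclique K & #|K| != 2].

Definition diamond_free : Prop :=
  ~ exists a b c d : V,
      [/\ uniq [:: a; b; c; d],
          [&& adj a b, adj a c, adj a d, adj b c & adj b d] & ~~ adj c d].

Definition in_inscribed (v : V) : bool := [exists K in inscribed, v \in K].

Definition sub_adj (D : {set {set V}}) : rel V :=
  fun u v => adj u v && ~~ [exists K in D, (u \in K) && (v \in K)].

Definition sub_choice (D : {set {set V}}) : Prop :=
  [/\ D \subset inscribed, D != set0 & D != inscribed].

End Graph.

(* Graphs on 'I_n; the rim is described by a cyclic ordering           *)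
(* c : 'I_n -> 'I_n, the i-th rim vertex being c i, followed by        *)
(* c (ordS i).                                                         *)
Section OnOrd.
Variable n : nat.
Implicit Types (adj : rel 'I_n) (c : 'I_n -> 'I_n).

Definition rim_order adj c : Prop :=
  [/\ 3 <= n, injective c &
      forall K : {set 'I_n},
        rim_edge adj K = [exists i : 'I_n, K == [set c i; c (ordS i)]]].

Definition multisun adj : Prop :=
  [/\ symmetric adj /\ irreflexive adj, odd n, diamond_free adj,
      exists c, rim_order adj c &
      forall K, K \in inscribed adj -> forall u v, u \in K -> v \in K ->
        u != v -> ~~ rim_edge adj [set u; v]].

Definition rv c (i : 'I_n) (j : nat) : 'I_n := c (iter j (@ordS n) i).

(* the subpath of C from rv c i 0 to rv c i k (k edges, k+1 vertices)
   whose internal vertices lie in no inscribed clique *)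
Definition clean_path adj c (i : 'I_n) (k : nat) : Prop :=
  [/\ 0 < k, k < n &
      forall j, 0 < j -> j < k -> ~~ in_inscribed adj (rv c i j)].

Definition N1 adj c : Prop :=
  forall A, A \in inscribed adj -> forall i k, clean_path adj c i k ->
    rv c i 0 \in A -> rv c i k \in A -> ~~ odd k.+1 /\ 4 <= k.+1.

Definition N2 adj : Prop :=
  forall A, A \in inscribed adj -> odd #|A|.

Definition N3 adj (xi : 'I_n) : Prop :=
  (forall A, A \in inscribed adj -> xi \in A) /\
  (forall A B, A \in inscribed adj -> B \in inscribed adj -> A != B ->
     A :&: B = [set xi]).

Definition N4 adj c (xi : 'I_n) : Prop :=
  forall A, A \in inscribed adj -> forall i k, clean_path adj c i k ->
    (rv c i 0 \in A /\ rv c i k = xi) \/ (rv c i 0 = xi /\ rv c i k \in A) ->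
    ~~ odd k.+1.

Definition N5 adj c : Prop :=
  forall A B, A \in inscribed adj -> B \in inscribed adj -> A != B ->
  forall i k, clean_path adj c i k ->
    (rv c i 0 \in A :\: B /\ rv c i k \in B :\: A) \/
    (rv c i 0 \in B :\: A /\ rv c i k \in A :\: B) ->
    odd k.+1.

Definition Nconds adj c : Prop :=
  [/\ N1 adj c, N2 adj, exists xi, N3 adj xi /\ N4 adj c xi & N5 adj c].

Definition sunoid adj : Prop :=
  multisun adj /\
  forall c, rim_order adj c ->
    Nconds adj c /\
    forall D, sub_choice adj D -> Nconds (sub_adj adj D) c.

End OnOrd.

(* Words.  Letters: None = epsilon, Some None = sigma,                 *)
(* Some (Some m) = proper letter number m.                             *)
Definition letter := option (option nat).
Definition Eps : letter := None.
Definition Sig : letter := Some None.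
Definition Pl (m : nat) : letter := Some (Some m).

Definition is_proper (l : letter) : bool :=
  if l is Some (Some _) then true else false.

Fixpoint del_ee (w : seq letter) : seq letter :=
  match w with
  | None :: None :: t => t
  | x :: t => x :: del_ee t
  | [::] => [::]
  end.

Definition pattern (w : seq letter) : seq letter := iter (size w) del_ee w.

Definition sim (v w : seq letter) : Prop :=
  exists k, w = rot k v \/ w = rot k (rev v).

Definition approx (u v : seq letter) : Prop := sim (pattern u) (pattern v).

Definition label n (adj : rel 'I_n) (name : {set 'I_n} -> nat) (v : 'I_n)
  : letter :=
  let S := [set K in inscribed adj | v \in K] in
  if 2 <= #|S| then Sig else
  if [pick K in S] is Some K then Pl (name K) else Eps.

Definition wordG n (adj : rel 'I_n) (c : 'I_n -> 'I_n)
  (name : {set 'I_n} -> nat) : seq letter :=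
  [seq label adj name (c i) | i <- enum 'I_n].

(* w represents a sunword: [w] is the s-word of some sunoid (for some
   reading of its rim and some naming of its inscribed cliques) *)
Definition is_sunword (w : seq letter) : Prop :=
  exists n (adj : rel 'I_n) (c : 'I_n -> 'I_n) (name : {set 'I_n} -> nat),
    [/\ sunoid adj, rim_order adj c, {in inscribed adj &, injective name}
      & approx (wordG adj c name) w].

Definition proper_letters (w : seq letter) : seq letter :=
  undup [seq l <- w | is_proper l].
Definition nproper (w : seq letter) : nat := size (proper_letters w).

Definition proj (w : seq letter) (X : seq letter) : seq letter :=
  let rem := head Eps [seq l <- proper_letters w | l \notin X] in
  [seq (if l \in X then Eps
        else if (size X == (nproper w).-1) && (l == Sig) then rem else l)
   | l <- w].

(* Main.v *)
Require Import Defs.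
From mathcomp Require Import all_boot zify.
From Stdlib Require Import FunctionalExtensionality.
Set Implicit Arguments. Unset Strict Implicit. Unset Printing Implicit Defensive.

Definition gE (a : letter) (r : seq letter) : seq letter :=
  if a is None then (if r is None :: r' then r' else None :: r) else a :: r.

Arguments gE : simpl never.

Fixpoint red (w : seq letter) : seq letter :=
  match w with [::] => [::] | a :: t => gE a (red t) end.

Arguments gE : simpl never.

Fixpoint reduced (w : seq letter) : bool :=
  match w with
  | None :: (None :: _) => false
  | _ :: t => reduced t
  | [::] => true
  end.

Lemma reduced_cons a t : reduced (a :: t) -> reduced t.
Proof. by case: a => [a|] //=; case: t => [|[b|] t]. Qed.

Lemma red_reduced w : reduced (red w).
Proof.
elim: w => //= a t IH; case: a => [a|] /=.
  by case: (red t) IH => [|[b|] r].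
case: (red t) IH => [|[b|] r] // H; exact: reduced_cons H.
Qed.

Lemma reduced_red w : reduced w -> red w = w.
Proof.
elim: w => //= a t IH H; rewrite IH ?(reduced_cons H) //.
by case: a H => [a|] //=; case: t {IH} => [|[b|] t].
Qed.

Lemma redK w : red (red w) = red w.
Proof. exact/reduced_red/red_reduced. Qed.

Lemma gEE r : reduced r -> gE None (gE None r) = r.
Proof. by case: r => [|[b|] [|[c|] r]]. Qed.

Lemma red_catr x y : red (x ++ y) = red (x ++ red y).
Proof. elim: x => [|a x IH] /=; first by rewrite redK. by rewrite IH. Qed.

Lemma red_catl x y : red (x ++ y) = red (red x ++ y).
Proof.
elim: x => [|a x IH] //=.
rewrite IH.
case: a => [a|] //=.
case E: (red x) => [|[b|] r] //.
by rewrite /= -/(gE None (gE None (red (r ++ y)))) gEE //; apply: red_reduced.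
Qed.

Lemma red_del_ee w : red (del_ee w) = red w.
Proof.
elim: w => //= a t IH; case: a => [a|] /=; first by rewrite IH.
case: t IH => [|[b|] t] //= IH; first by rewrite IH.
by rewrite gEE //; apply: red_reduced.
Qed.

Lemma del_ee_reduced w : reduced w -> del_ee w = w.
Proof.
elim: w => //= a t IH; case: a => [a|] /= H.
  by rewrite IH // (reduced_cons H).
by case: t IH H => [|[b|] t] //= IH H; rewrite IH.
Qed.

Lemma del_ee_size w : ~~ reduced w -> (size (del_ee w)).+2 = size w.
Proof.
elim: w => //= a t IH; case: a => [a|] /= H; first by rewrite IH.
by case: t IH H => [|[b|] t] //= IH H; rewrite IH.
Qed.

Lemma iter_fix (k : nat) w : reduced w -> iter k del_ee w = w.
Proof. by move=> H; elim: k => //= k ->; rewrite del_ee_reduced. Qed.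

Lemma iter_red k w : size w <= k -> iter k del_ee w = red w.
Proof.
elim: k w => [|k IH] w Hs.
  by case: w Hs.
rewrite iterSr; case R: (reduced w).
  by rewrite del_ee_reduced // iter_fix // reduced_red.
rewrite IH ?red_del_ee //.
have := del_ee_size (negbT R); lia.
Qed.

Lemma pattern_red w : pattern w = red w.
Proof. exact: iter_red. Qed.

Lemma red_map (f : letter -> letter) x : f None = None ->
  red (map f x) = red (map f (red x)).
Proof.
move=> f0; elim: x => //= a x IH.
case: a => [a|] /=; first by rewrite IH.
rewrite f0 /= IH.
case E: (red x) => [|[b|] r] /=.
- by rewrite /gE /= f0.
- by rewrite {2}/gE /= f0.
- rewrite {2}/gE /= f0 gEE //; exact: red_reduced.
Qed.

Lemma red_mem x l : l != None -> (l \in red x) = (l \in x).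
Proof.
move=> Hl; elim: x => //= a x IH.
case: a => [a|] /=; first by rewrite /gE !in_cons IH.
rewrite in_cons (negbTE Hl) /= -IH /gE.
by case: (red x) => [|[b|] r] //; rewrite !in_cons (negbTE Hl).
Qed.

Lemma reduced_consE a t :
  reduced (a :: t) = reduced t && ~~ ((a == None) && (head (Some None) t == None)).
Proof. case: a => [a|] /=; rewrite ?andbT //; case: t => [|[b|] t] //=; rewrite ?andbT ?andbF //. Qed.

Lemma reduced_rcons s a :
  reduced (rcons s a) = reduced s && ~~ ((a == None) && (last (Some None) s == None)).
Proof.
elim: s => [|b s IH]; first by case: a.
rewrite rcons_cons reduced_consE IH reduced_consE.
case: s IH => [|c s] IH; first by clear IH; case: a => [a|]; case: b => [b|].
rewrite rcons_cons /=.
by rewrite -!andbA [X in _ && X]andbC.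
Qed.

Lemma last_rev_head (x0 : letter) t : last x0 (rev t) = head x0 t.
Proof. by case: t => // a t; rewrite rev_cons last_rcons. Qed.

Lemma reduced_rev x : reduced x -> reduced (rev x).
Proof.
elim: x => // a t IH H.
rewrite rev_cons reduced_rcons last_rev_head IH ?(reduced_cons H) //=.
by move: H; rewrite reduced_consE => /andP[].
Qed.

Lemma red_rev x : red (rev x) = rev (red x).
Proof.
elim: x => // a x IH.
rewrite rev_cons -cats1 red_catl IH /=.
have Hr := red_reduced x.
have Hg := red_reduced (a :: x). rewrite /= in Hg.
case E: (gE a (red x) == a :: red x).
  rewrite (eqP E) in Hg *; rewrite cats1 -rev_cons.
  exact: (reduced_red (reduced_rev Hg)).
move: E Hg; rewrite /gE; case: a => [a|]; first by rewrite eqxx.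
case E: (red x) Hr => [|[b|] r] Hr; rewrite ?eqxx // => _ Hg.
rewrite rev_cons -cats1 -catA /= red_catr /= cats0.
exact: (reduced_red (reduced_rev (reduced_cons Hr))).
Qed.

Lemma red_cat2 x y : red (x ++ y) = red (red x ++ red y).
Proof. by rewrite red_catl red_catr. Qed.

Lemma red_split u s1 s2 : red u = s1 ++ s2 ->
  exists u1 u2, [/\ u = u1 ++ u2, red u1 = s1 & red u2 = s2].
Proof.
elim: u s1 s2 => [|x t IH] s1 s2 /=.
  by case: s1 => //; case: s2 => // _; exists [::], [::].
case: s1 => [|y s1] /=.
  by move=> <-; exists [::], (x :: t).
case: x => [x|] /=.
  rewrite {1}/gE => -[<- /IH [t1 [t2 [-> H1 H2]]]].
  by exists (Some x :: t1), t2; rewrite /= H1.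
rewrite /gE; case E: (red t) => [|[b|] r].
- case=> <- Hs; exists [:: None], t; split => //.
    by case: s1 Hs.
  by rewrite E; case: s1 Hs => //; case: s2.
- case=> <- Hs; have [t1 [t2 [-> H1 H2]]] := IH s1 s2 (etrans E Hs).
  exists (None :: t1), t2; split => //=; rewrite H1 /gE.
  by case: s1 Hs {H1} => [|[c|] s1] // [<-].
- move=> Hs.
  have [t1 [t2 [-> H1 H2]]] := IH [:: None, y & s1] s2 ltac:(by rewrite E Hs).
  by exists (None :: t1), t2; rewrite /= H1 /gE.
Qed.

Lemma red_rot_match t u k : red t = rot k (red u) ->
  exists m, red t = red (rot m u).
Proof.
move=> H.
have := cat_take_drop k (red u) => /esym /red_split [u1 [u2 [Eu H1 H2]]].
exists (size u1); rewrite Eu rot_size_cat red_cat2 H1 H2 -/(rot k (red u)) -H.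
by rewrite redK.
Qed.

Lemma word_main (u w : seq letter) (f : letter -> letter) : f None = None ->
  sim (red u) (red w) ->
  exists m, red (map f w) = red (rot m (map f u)) \/
            red (map f w) = rev (red (rot m (map f u))).
Proof.
move=> f0 [k [H|H]].
  have [m Hm] := red_rot_match H.
  by exists m; left; rewrite red_map // Hm -red_map // map_rot.
have H' : red (rev w) = rot (size (red u) - k) (red u).
  by rewrite red_rev H rev_rot revK /rotr.
have [m Hm] := red_rot_match H'.
exists m; right.
have: red (map f (rev w)) = red (rot m (map f u)).
  by rewrite red_map // Hm -red_map // map_rot.
by rewrite map_rev red_rev => <-; rewrite revK.
Qed.

Section G0.
Variables (V : finType) (adj : rel V).

Lemma cliqueP (K : {set V}) :
  reflect (forall u v, u \in K -> v \in K -> u != v -> adj u v) (clique adj K).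
Proof.
apply: (iffP forallP) => [H u v Hu Hv Huv|H u].
  by move/implyP: (H u) => /(_ Hu) /forallP /(_ v) /implyP /(_ Hv) /implyP /(_ Huv).
apply/implyP => Hu; apply/forallP => v; apply/implyP => Hv; apply/implyP.
exact: H.
Qed.

Lemma cliqueE (K : {set V}) u v :
  clique adj K -> u \in K -> v \in K -> u != v -> adj u v.
Proof. by move/cliqueP; apply. Qed.

Lemma maxcliqueP (K : {set V}) : maxclique adj K <->
  clique adj K /\ forall K' : {set V}, K \proper K' -> ~~ clique adj K'.
Proof.
rewrite /maxclique; split.
  by case/andP => H1 /forallP H2; split => // K'; move/implyP: (H2 K').
case=> H1 H2; rewrite H1 /=; apply/forallP => K'; apply/implyP; exact: H2.
Qed.

Lemma clique_sub (K K' : {set V}) : K' \subset K -> clique adj K -> clique adj K'.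
Proof.
move=> /subsetP S /cliqueP H; apply/cliqueP => u v Hu Hv; apply: H; exact: S.
Qed.

Lemma clique_ext (K : {set V}) : clique adj K -> exists M, [/\ maxclique adj M & K \subset M].
Proof.
move=> HK.
have P0 : (fun K' : {set V} => clique adj K' && (K \subset K')) K by rewrite /= HK subxx.
case: (@arg_maxnP _ K (fun K' : {set V} => clique adj K' && (K \subset K')) (fun K' : {set V} => #|K'|) P0) => M /andP[HM1 HM2] Hmax.
exists M; split => //; apply/maxcliqueP; split => // K' HP.
apply/negP => HK'.
have := Hmax K'; rewrite HK' (subset_trans HM2 (proper_sub HP)) => /(_ isT).
by have := proper_card HP; lia.
Qed.

End G0.

Section G.
Variables (V : finType) (adj : rel V).
Hypothesis adjC : symmetric adj.
Hypothesis dfree : diamond_free adj.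

Lemma max_inter (K1 K2 : {set V}) u v : maxclique adj K1 -> maxclique adj K2 ->
  u \in K1 -> v \in K1 -> u \in K2 -> v \in K2 -> u != v -> K1 = K2.
Proof.
move=> /maxcliqueP [C1 M1] /maxcliqueP [C2 M2] u1 v1 u2 v2 uv.
apply/eqP; apply/negPn/negP => N12.
have [a a1 a2] : exists2 a, a \in K1 & a \notin K2.
  apply/subsetPn/negP => S.
  have : K1 \proper K2 by rewrite properEneq N12.
  by move/M1; rewrite C2.
have [x x2 xa] : exists2 x, x \in K2 & ~~ adj a x.
  case E: [exists x in K2, ~~ adj a x].
    by case/existsP: E => x /andP[? ?]; exists x.
  exfalso; move/negbT: E => /existsPn E.
  have : K2 \proper a |: K2.
    apply/properP; split; first exact: subsetUr.
    by exists a => //; rewrite !inE eqxx.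
  move/M2/negP; apply; apply/cliqueP => y z.
  rewrite !inE => /orP[/eqP->|y2] /orP[/eqP->|z2] yz.
  - by rewrite eqxx in yz.
  - by move: (E z); rewrite z2 /= negbK.
  - by rewrite adjC; move: (E y); rewrite y2 /= negbK.
  - by move/cliqueP: C2; apply.
apply: dfree; exists u, v, a, x; split.
- rewrite /= !inE !negb_or uv.
  have ua : u != a by apply/eqP => E; rewrite -E u2 in a2.
  have va : v != a by apply/eqP => E; rewrite -E v2 in a2.
  have ux : u != x by apply/eqP => E; move: xa; rewrite -E; move/cliqueP: C1 => ->; rewrite // eq_sym.
  have vx : v != x by apply/eqP => E; move: xa; rewrite -E; move/cliqueP: C1 => ->; rewrite // eq_sym.
  have ax : a != x by apply/eqP => E; rewrite E x2 in a2.
  by rewrite /= ua ux va vx ax.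
- move/cliqueP: C1 => C1; move/cliqueP: C2 => C2.
  have ua : u != a by apply/eqP => E; rewrite -E u2 in a2.
  have va : v != a by apply/eqP => E; rewrite -E v2 in a2.
  have ux : u != x by apply/eqP => E; move: xa; rewrite -E C1 // eq_sym.
  have vx : v != x by apply/eqP => E; move: xa; rewrite -E C1 // eq_sym.
  by rewrite (C1 u v) ?(C1 u a) ?(C1 v a) ?(C2 u x) ?(C2 v x).
- exact: xa.
Qed.

Variable D : {set {set V}}.
Hypothesis DI : D \subset inscribed adj.

Lemma sub_clique (K : {set V}) : clique (sub_adj adj D) K -> clique adj K.
Proof.
move/cliqueP => H; apply/cliqueP => u v Hu Hv Huv.
by case/andP: (H u v Hu Hv Huv).
Qed.

Lemma max_notD_clique (M : {set V}) : maxclique adj M -> M \notin D -> clique (sub_adj adj D) M.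
Proof.
move=> HM MD; have [C' _] := (maxcliqueP adj M).1 HM.
apply/cliqueP => u v Hu Hv Huv; rewrite /sub_adj (cliqueE C') //=.
apply/negP => /existsP [K /andP[KD /andP[uK vK]]].
have KI := subsetP DI _ KD; rewrite inE in KI; case/andP: KI => KM _.
have E := max_inter HM KM Hu Hv uK vK Huv.
by rewrite E KD in MD.
Qed.

Lemma sub_dfree : diamond_free (sub_adj adj D).
Proof.
case=> a [b [c [d [U /and5P[ab ac ad bc bd] ncd]]]].
have sa x y : sub_adj adj D x y -> adj x y by case/andP.
move: (U); rewrite /= !inE !negb_or => /and4P[/and3P[_ nac nad] _ ncd' _].
case Acd: (adj c d).
  move: ncd; rewrite /sub_adj Acd /= negbK => /existsP [K /andP[KD /andP[cK dK]]].
  have T : clique adj [set a; c; d].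
    apply/cliqueP => x y; rewrite !inE.
    move=> /orP[/orP[]|]/eqP-> /orP[/orP[]|]/eqP->; rewrite ?eqxx // => _;
      by rewrite ?(sa _ _ ac) ?(sa _ _ ad) ?Acd // adjC ?(sa _ _ ac) ?(sa _ _ ad) ?Acd.
  have [M [HM TM]] := clique_ext T.
  have KI := subsetP DI _ KD; rewrite inE in KI; case/andP: KI => KM _.
  have cM : c \in M by rewrite (subsetP TM) // !inE eqxx orbT.
  have dM : d \in M by rewrite (subsetP TM) // !inE eqxx !orbT.
  have aM : a \in M by rewrite (subsetP TM) // !inE eqxx.
  have EM := max_inter HM KM cM dM cK dK ncd'.
  move: ac; rewrite /sub_adj => /andP[_ /negP]; apply.
  by apply/existsP; exists K; rewrite KD -EM aM cM.
apply: dfree; exists a, b, c, d; split => //.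
  by rewrite /= (sa _ _ ab) (sa _ _ ac) (sa _ _ ad) (sa _ _ bc) (sa _ _ bd).
by rewrite Acd.
Qed.

Variable v0 : V.
Hypothesis rimv : forall v, exists M, [/\ maxclique adj M, #|M| = 2 & v \in M].

Lemma maxclique_gt1 (K : {set V}) : maxclique adj K -> 1 < #|K|.
Proof.
case/maxcliqueP => C M; case: (ltnP 1 #|K|) => // HK; exfalso.
have [v Kv] : exists v, K \subset [set v].
  case: (set_0Vmem K) => [->|[v vK]].
    by exists v0; exact: sub0set.
  exists v; apply/subsetP => y yK; rewrite inE; apply/negPn/negP => yv.
  have : 1 < #|K| by apply/card_gt1P; exists y, v.
  by rewrite ltnNge HK.
have [M0 [HM0 cM0 vM0]] := rimv v.
have [CM0 _] := (maxcliqueP adj M0).1 HM0.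
have P : K \proper M0.
  rewrite properEneq (subset_trans Kv) ?sub1set // andbT.
  by apply/eqP => E; move: HK; rewrite E cM0.
by move: (M _ P); rewrite CM0.
Qed.

Lemma sub_maxclique (K : {set V}) :
  maxclique (sub_adj adj D) K = maxclique adj K && (K \notin D).
Proof.
apply/idP/idP.
- case/maxcliqueP => C M.
  case: (ltnP 1 #|K|) => HK.
    case/card_gt1P: HK => a [b [aK bK ab]].
    have [M' [HM' KM']] := clique_ext (sub_clique C).
    have M'D : M' \notin D.
      apply/negP => M'D.
      have := cliqueE C aK bK ab; rewrite /sub_adj => /andP[_ /negP]; apply.
      by apply/existsP; exists M'; rewrite M'D (subsetP KM') // (subsetP KM').
    have CM' := max_notD_clique HM' M'D.
    have EK : K = M'.
      apply/eqP; rewrite eqEproper KM' /=; apply/negP => P.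
      by move: (M _ P); rewrite CM'.
    by rewrite EK HM' M'D.
  exfalso.
  have [v Kv] : exists v, K \subset [set v].
    case: (set_0Vmem K) => [->|[v vK]].
      by exists v0; exact: sub0set.
    exists v; apply/subsetP => y yK; rewrite inE; apply/negPn/negP => yv.
    have : 1 < #|K| by apply/card_gt1P; exists y, v.
    by rewrite ltnNge HK.
  have [M0 [HM0 cM0 vM0]] := rimv v.
  have M0D : M0 \notin D.
    apply/negP => /(subsetP DI); rewrite inE cM0 => /andP[_]; by [].
  have CM0 := max_notD_clique HM0 M0D.
  have P : K \proper M0.
    rewrite properEneq (subset_trans Kv) ?sub1set // andbT.
    by apply/eqP => E; move: HK; rewrite E cM0.
  by move: (M _ P); rewrite CM0.
- case/andP => HK KD; have [C M] := (maxcliqueP adj K).1 HK.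
  apply/maxcliqueP; split; first exact: max_notD_clique.
  move=> K' P; apply/negP => /sub_clique; apply/negP; exact: M.
Qed.

End G.

Section Read.
Variable n : nat.
Hypothesis n0 : 0 < n.

Lemma val_iter_ordS (i : 'I_n) m : val (iter m (@ordS n) i) = (i + m) %% n.
Proof.
elim: m => [|m IH] /=; first by rewrite addn0 modn_small.
by rewrite IH -addn1 modnDml -addnA addn1.
Qed.

Lemma iter_ordS_inj m : injective (iter m (@ordS n)).
Proof. elim: m => [|m IH] x y //= /ordS_inj; exact: IH. Qed.

Lemma nth_rot_mod (T : Type) (x0 : T) (s : seq T) m j :
  m <= size s -> j < size s -> nth x0 (rot m s) j = nth x0 s ((j + m) %% size s).
Proof.
move=> Hm Hj; rewrite /rot nth_cat size_drop.
case: ltnP => H.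
  have Hl : j + m < size s by move: H Hm; clear; lia.
  by rewrite nth_drop modn_small // addnC.
have Hl : j - (size s - m) < m by move: H Hm Hj; clear; lia.
rewrite nth_take //.
have E : j + m = (j - (size s - m)) + size s by move: H Hm Hj; clear; lia.
by rewrite E modnDr modn_small // (leq_trans Hl Hm).
Qed.

Lemma map_iter_rot (T : Type) (g : 'I_n -> T) m : m <= n ->
  [seq g (iter m (@ordS n) i) | i <- enum 'I_n] = rot m [seq g i | i <- enum 'I_n].
Proof.
move=> Hm; set t0 := g (Ordinal n0).
have Se : size (enum 'I_n) = n := size_enum_ord n.
have Sz : size [seq g i | i <- enum 'I_n] = n by rewrite size_map.
have Hmod j : (j + m) %% n < n by apply: ltn_pmod.
apply: (@eq_from_nth _ t0); first by rewrite size_rot !size_map.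
rewrite size_map Se => j Hj.
rewrite (nth_map (Ordinal n0)) ?Se //.
rewrite nth_rot_mod ?Sz //.
rewrite (nth_map (Ordinal n0)) ?Se //.
congr g; apply: val_inj; rewrite val_iter_ordS !nth_enum_ord //; exact: (esym (nth_enum_ord _ (Hmod j))).
Qed.

End Read.

Lemma iter_comm (T : Type) (f : T -> T) m x : iter m f (f x) = f (iter m f x).
Proof. by rewrite -iterSr iterS. Qed.

Lemma rim_order_shift n (adj : rel 'I_n) c m :
  rim_order adj c -> rim_order adj (fun i => c (iter m (@ordS n) i)).
Proof.
case=> H3 Hinj Hr; split => //.
  by move=> x y /Hinj /iter_ordS_inj.
move=> K; rewrite Hr.
have [g gK Kg] := injF_bij (@iter_ordS_inj n m).
apply/existsP/existsP => [[j Hj]|[i Hi]].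
  by exists (g j); rewrite iter_comm Kg.
by exists (iter m (@ordS n) i); rewrite -iter_comm.
Qed.

Lemma rim_order_ext n (adj1 adj2 : rel 'I_n) c :
  (forall K, rim_edge adj1 K = rim_edge adj2 K) ->
  rim_order adj1 c -> rim_order adj2 c.
Proof. by move=> E [H1 H2 H3]; split => // K; rewrite -E. Qed.

Section Main.
Variables (n : nat) (adj : rel 'I_n) (c : 'I_n -> 'I_n) (name : {set 'I_n} -> nat)
  (xi : 'I_n).
Hypotheses (Hms : multisun adj) (Hrim : rim_order adj c) (HN3 : N3 adj xi)
  (Hinj : {in inscribed adj &, injective name}).

Lemma adjC : symmetric adj. Proof. by case: Hms => [[]]. Qed.
Lemma dfree : diamond_free adj. Proof. by case: Hms. Qed.
Lemma cinj : injective c. Proof. by case: Hrim. Qed.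
Lemma n3 : 2 < n. Proof. by case: Hrim. Qed.
Lemma csurj v : exists i, v = c i.
Proof. have [g gK Kg] := injF_bij cinj; by exists (g v); rewrite Kg. Qed.
Definition v0 : 'I_n := Ordinal (leq_trans (isT : 0 < 3) n3).

Lemma rimv v : exists M, [/\ maxclique adj M, #|M| = 2 & v \in M].
Proof.
have [i ->] := csurj v; case: Hrim => _ Hi Hr.
have : rim_edge adj [set c i; c (ordS i)] by rewrite Hr; apply/existsP; exists i.
case/andP => HM /eqP HC; exists [set c i; c (ordS i)]; split => //.
by rewrite !inE eqxx.
Qed.

Definition Sv v := [set K in inscribed adj | v \in K].

Lemma SvE v K : (K \in Sv v) = (K \in inscribed adj) && (v \in K).
Proof. exact: in_set. Qed.

Lemma insc_gt2 K : K \in inscribed adj -> 2 < #|K|.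
Proof.
rewrite inE => /andP[HM H2].
have := maxclique_gt1 v0 rimv HM; move/eqP: H2; lia.
Qed.

Lemma priv K : K \in inscribed adj -> exists v, v \in K /\ Sv v = [set K].
Proof.
move=> KI; have H := insc_gt2 KI.
have : 0 < #|K :\ xi|.
  move: H; rewrite (cardsD1 xi K); case: (xi \in K) => /=; lia.
case/card_gt0P => v; rewrite !inE => /andP[vxi vK].
exists v; split => //; apply/setP => K'; rewrite SvE in_set1.
apply/andP/eqP => [[K'I vK']|->]; last by [].
apply/eqP; apply/negPn/negP => NK.
have /setP /(_ v) := HN3.2 _ _ K'I KI NK; rewrite !inE vK vK' /=.
by move=> E; rewrite -E in vxi.
Qed.

Lemma Sv_two v : 1 < #|Sv v| -> v = xi /\ Sv v = inscribed adj.
Proof.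
case/card_gt1P => K1 [K2 []]; rewrite !SvE => /andP[K1I vK1] /andP[K2I vK2] N.
have /setP /(_ v) := HN3.2 _ _ K1I K2I N; rewrite !inE vK1 vK2 /= => /esym/eqP E.
split => //; apply/setP => K; rewrite SvE; apply/andP/idP => [[]//|KI].
by split => //; rewrite E HN3.1.
Qed.

Lemma label_proper v l : label adj name v = l -> is_proper l ->
  exists K, K \in inscribed adj /\ l = Pl (name K).
Proof.
rewrite /label; case: ifP => _; first by move=> <-.
case: pickP => [K|_]; last by move=> <-.
by rewrite inE => /andP[KI _] <- _; exists K.
Qed.

Lemma label_priv K v : Sv v = [set K] -> label adj name v = Pl (name K).
Proof.
move=> E; rewrite /label -/(Sv v) E cards1 /=.
case: pickP => [K'|/(_ K)]; last by rewrite inE eqxx.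
by rewrite inE => /eqP ->.
Qed.

Definition Lnames := [seq Pl (name K) | K <- enum (inscribed adj)].

Lemma Lnames_uniq : uniq Lnames.
Proof.
rewrite map_inj_in_uniq ?enum_uniq // => K1 K2; rewrite !mem_enum => H1 H2 [].
exact: Hinj.
Qed.

Lemma mem_u l : is_proper l ->
  (l \in wordG adj c name) = (l \in Lnames).
Proof.
move=> Pl_; apply/mapP/mapP => [[i _ E]|[K]].
  have [K [KI ->]] := label_proper (esym E) Pl_.
  by exists K; rewrite ?mem_enum.
rewrite mem_enum => KI ->.
have [v [vK E]] := priv KI; have [i Ei] := csurj v.
by exists i; rewrite ?mem_enum // -Ei (label_priv E).
Qed.

Lemma pick1 (T : finType) (A : {set T}) x : A = [set x] -> [pick y in A] = Some x.
Proof.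
move=> ->; case: pickP => [y|/(_ x)]; last by rewrite inE eqxx.
by rewrite inE => /eqP ->.
Qed.

Lemma pick0 (T : finType) (A : {set T}) : A = set0 -> [pick y in A] = None.
Proof. by move=> ->; case: pickP => // y; rewrite inE. Qed.

Variable X : seq letter.
Hypothesis HXp : forall l, l \in X -> is_proper l.
Definition D := [set K in inscribed adj | Pl (name K) \in X].

Lemma DE K : (K \in D) = (K \in inscribed adj) && (Pl (name K) \in X).
Proof. exact: in_set. Qed.

Lemma inscE (adj' : rel 'I_n) K : (K \in inscribed adj') = maxclique adj' K && (#|K| != 2).
Proof. exact: in_set. Qed.

Lemma DI : D \subset inscribed adj.
Proof. by apply/subsetP => K; rewrite DE => /andP[]. Qed.

Lemma sub_max K : maxclique (sub_adj adj D) K = maxclique adj K && (K \notin D).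
Proof. exact: (sub_maxclique adjC dfree DI v0 rimv). Qed.

Lemma sub_rim K : rim_edge (sub_adj adj D) K = rim_edge adj K.
Proof.
rewrite /rim_edge sub_max; case E: (#|K| == 2); rewrite ?andbF ?andbT //.
case M: (maxclique adj K) => //=; apply/negP => /(subsetP DI).
by rewrite inE E andbF.
Qed.

Lemma sub_insc : inscribed (sub_adj adj D) = inscribed adj :\: D.
Proof.
apply/setP => K; rewrite in_setD DE !inscE sub_max DE inscE.
by case: (maxclique adj K); case: (#|K| != 2); case: (Pl (name K) \in X).
Qed.

Lemma sub_sub_adj (D' : {set {set 'I_n}}) :
  sub_adj (sub_adj adj D) D' = sub_adj adj (D :|: D').
Proof.
apply: functional_extensionality => x; apply: functional_extensionality => y.
rewrite /sub_adj -andbA; congr (_ && _).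
rewrite -negb_or; congr (~~ _).
apply/orP/existsP => [[]/existsP[K /andP[KD H]]|[K /andP[]]].
- by exists K; rewrite inE KD H.
- by exists K; rewrite inE KD H orbT.
- rewrite inE => /orP[KD|KD] H; [left|right]; apply/existsP; exists K; by rewrite KD.
Qed.

Lemma sub_sunoid : sunoid adj -> D != set0 -> D != inscribed adj ->
  sunoid (sub_adj adj D).
Proof.
move=> [_ Hsun] D0 DN; split.
  case: Hms => [[Hs Hi] Ho _ _ Hnc]; split => //.
  - split => [x y|x]; last by rewrite /sub_adj Hi.
    rewrite /sub_adj adjC; congr (_ && ~~ _).
    by apply/existsP/existsP => [[K /and3P[? ? ?]]|[K /and3P[? ? ?]]]; exists K; apply/and3P.
  - exact: (sub_dfree adjC dfree DI).
  - by exists c; apply: (rim_order_ext _ Hrim) => K; rewrite sub_rim.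
  - move=> K; rewrite sub_insc in_setD => /andP[_ KI] u v uK vK uv.
    by rewrite sub_rim; apply: Hnc KI u v uK vK uv.
move=> c' Hc'.
have Hc : rim_order adj c' by apply: (rim_order_ext _ Hc') => K; rewrite sub_rim.
have [_ HD] := Hsun c' Hc; split; first by apply: HD; split => //; exact: DI.
move=> D' [HD'1 HD'2 HD'3]; rewrite sub_sub_adj; apply: HD; split.
- by rewrite subUset DI /=; apply: subset_trans HD'1 _; rewrite sub_insc subsetDl.
- by apply: contra D0; rewrite -!subset0 => /subsetP S; apply/subsetP => K KD; apply: S; rewrite inE KD.
- apply: contra HD'3 => /eqP E; rewrite sub_insc; apply/eqP/setP => K.
  rewrite in_setD -E in_setU; case KD: (K \in D) => //=.
  apply/negbTE/negP => KD'; have := subsetP HD'1 _ KD'.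
  by rewrite sub_insc in_setD KD.
Qed.

Variables (p q : nat) (rem : letter).
Hypotheses (Hp : #|inscribed adj| = p) (HqD : #|D| = q) (Hqp : q < p)
  (Hrem : q = p.-1 -> forall K0, inscribed adj :\: D = [set K0] -> rem = Pl (name K0)).

Definition fproj (l : letter) : letter :=
  if l \in X then Eps else if (q == p.-1) && (l == Sig) then rem else l.

Lemma label_sub v : label (sub_adj adj D) name v = fproj (label adj name v).
Proof.
have SvS : [set K in inscribed (sub_adj adj D) | v \in K] = Sv v :\: D.
  apply/setP => K; rewrite in_set sub_insc in_setD in_setD SvE.
  by case: (K \in D); rewrite ?andbF.
have L1 : label adj name v = (if 2 <= #|Sv v| then Sig else
   if [pick K in Sv v] is Some K then Pl (name K) else Eps) by [].
have L2 : label (sub_adj adj D) name v = (if 2 <= #|Sv v :\: D| then Sig else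
   if [pick K in Sv v :\: D] is Some K then Pl (name K) else Eps).
  by rewrite /label SvS.
have SigX : Sig \notin X by apply/negP => /HXp.
have EpsX : Eps \notin X by apply/negP => /HXp.
rewrite L1 L2; case: (ltnP 1 #|Sv v|) => H2.
  have [_ ES] := Sv_two H2.
  have C : #|Sv v :\: D| = p - q.
    by rewrite ES cardsD (setIidPr DI) Hp HqD.
  rewrite /fproj (negbTE SigX) eqxx andbT C.
  case: eqP => Hq.
    have : #|Sv v :\: D| == 1 by rewrite C; move: Hqp Hq; clear; lia.
    case/cards1P => K0 E1; rewrite -C E1 cards1 /= (pick1 (erefl _)).
    by rewrite (Hrem Hq (K0 := K0)) // -ES.
  have -> : 2 <= p - q by move: Hqp Hq; clear; lia.
  by [].
case: (set_0Vmem (Sv v)) => [E0|[K KS]]; last first.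
  have E1 : Sv v = [set K].
    apply/eqP; rewrite eq_sym eqEcard sub1set KS cards1.
    exact: H2.
  have KI : K \in inscribed adj by move: KS; rewrite SvE => /andP[].
  rewrite E1 (pick1 (erefl [set K])) /fproj.
  case KD: (K \in D).
    have -> : [set K] :\: D = set0.
      by apply/setP => y; rewrite in_setD in_set1 in_set0; case E: (y == K); rewrite ?andbF // (eqP E) KD.
    rewrite cards0 /= pick0 //.
    by move: KD; rewrite DE KI /= => ->.
  have -> : [set K] :\: D = [set K].
    by apply/setP => y; rewrite in_setD in_set1; case E: (y == K); rewrite ?andbF ?andbT // (eqP E) KD.
  rewrite cards1 /= (pick1 (erefl _)).
  by move: KD; rewrite DE KI /= => ->; rewrite andbF.
by rewrite E0 set0D cards0 /= !pick0 // /fproj (negbTE EpsX) andbF.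
Qed.

End Main.

Lemma mem_sim (u w : seq letter) l : l != None -> sim (red u) (red w) ->
  (l \in w) = (l \in u).
Proof.
move=> Hl [k [H|H]]; rewrite -(red_mem w Hl) H mem_rot ?mem_rev red_mem //.
Qed.

Theorem proposition3 (w : seq letter) (X : seq letter) :
  is_sunword w ->
  2 <= nproper w ->
  uniq X ->
  {subset X <= proper_letters w} ->
  size X < nproper w ->
  is_sunword (proj w X).
Proof.
move=> [n [adj [c [name [Hsun Hrim Hinj Happ]]]]] Hp UX HX Hq.
case: X UX HX Hq => [|x0 X0] UX HX Hq.
  have -> : proj w [::] = w.
    rewrite /proj -[RHS]map_id; apply: eq_map => l /=.
    have -> : (0 == (nproper w).-1) = false by move: Hp; clear; lia.
    by [].
  by exists n, adj, c, name.
set X := x0 :: X0.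
have [Hms Hsun'] := Hsun.
have [[_ _ [xi [HN3 _]] _] _] := Hsun' c Hrim.
set u := wordG adj c name.
move: Happ; rewrite /approx !pattern_red => Happ.
have HXp : forall l, l \in X -> is_proper l.
  by move=> l /HX; rewrite mem_undup mem_filter => /andP[].
have Lp : forall l, l \in Lnames adj name -> is_proper l.
  by move=> l /mapP [K _ ->].
have PL : proper_letters w =i Lnames adj name.
  move=> l; rewrite mem_undup mem_filter.
  case Pl_: (is_proper l) => /=.
    rewrite (mem_sim _ Happ); last by case: l Pl_ => [[]|].
    exact: (mem_u name Hrim HN3 Pl_).
  by apply/esym/negbTE/negP => /Lp; rewrite Pl_.
have Hnp : nproper w = #|inscribed adj|.
  rewrite /nproper (perm_size (uniq_perm (undup_uniq _) (Lnames_uniq Hinj) PL)).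
  by rewrite size_map -cardE.
have HDq : #|D adj name X| = size X.
  have E : X =i [seq Pl (name K) | K <- enum (D adj name X)].
    move=> l; apply/idP/mapP => [lX|[K]].
      have := HX _ lX; rewrite PL => /mapP [K]; rewrite mem_enum => KI El.
      by exists K; rewrite // mem_enum DE KI -El.
    by rewrite mem_enum DE => /andP[_ ?] ->.
  rewrite cardE -(size_map (fun K => Pl (name K))).
  apply/esym/perm_size/uniq_perm => //.
  rewrite map_inj_in_uniq ?enum_uniq // => K1 K2; rewrite !mem_enum !DE.
  by move=> /andP[K1I _] /andP[K2I _] [] /Hinj; apply.
set rem := head Eps [seq l <- proper_letters w | l \notin X].
have Hrem : size X = (nproper w).-1 -> forall K0,
    inscribed adj :\: D adj name X = [set K0] -> rem = Pl (name K0).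
  move=> _ K0 E0.
  have K0I : K0 \in inscribed adj :\: D adj name X by rewrite E0 inE.
  rewrite in_setD DE in K0I; case/andP: K0I => HK0 K0I; rewrite K0I /= in HK0.
  have Hall : forall l, l \in [seq l <- proper_letters w | l \notin X] -> l = Pl (name K0).
    move=> l; rewrite mem_filter PL => /andP[lX /mapP [K]]; rewrite mem_enum => KI El.
    have : K \in [set K0] by rewrite -E0 in_setD DE KI -El lX.
    by rewrite inE El => /eqP ->.
  have Hin : Pl (name K0) \in [seq l <- proper_letters w | l \notin X].
    by rewrite mem_filter HK0 PL; apply/mapP; exists K0; rewrite ?mem_enum.
  rewrite /rem; case: [seq l <- proper_letters w | l \notin X] Hall Hin => // a s Hall _.
  by apply: Hall; rewrite mem_head.
set f := fproj X (nproper w) (size X) rem.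
have -> : proj w X = map f w by [].
have f0 : f None = None.
  by rewrite /f /fproj; case: ifP; rewrite ?andbF.
have [m Hm] := word_main f0 Happ.
have Hfu : map f u = wordG (sub_adj adj (D adj name X)) c name.
  rewrite /u /wordG -map_comp; apply: eq_map => i /=.
  by rewrite /f (label_sub Hms Hrim HN3 HXp (esym Hnp) HDq (rem := rem)) // -Hnp.
have n0 : 0 < n by case: Hrim => H _ _; move: H; clear; lia.
have [c' [Hc' Ec']] : exists c', rim_order adj c' /\
    rot m (map f u) = wordG (sub_adj adj (D adj name X)) c' name.
  case: (leqP m n) => Hmn.
    exists (fun i => c (iter m (@ordS n) i)); split.
      exact: rim_order_shift.
    by rewrite Hfu /wordG (map_iter_rot n0 (fun i => label _ name (c i))).
  exists c; split => //; rewrite rot_oversize // Hfu /wordG size_map size_enum_ord.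
  exact: ltnW.
have XN : X != [::] by [].
exists n, (sub_adj adj (D adj name X)), c', name; split.
- apply: (sub_sunoid Hms Hrim Hsun).
    apply/set0Pn; have := HX x0 (mem_head _ _); rewrite PL => /mapP [K].
    rewrite mem_enum => KI E; exists K; rewrite DE KI -E mem_head //.
  apply/negP => /eqP E; move: Hq; rewrite Hnp -HDq E ltnn //.
- apply: (rim_order_ext _ Hc') => K.
  by rewrite (sub_rim name Hms Hrim).
- move=> K1 K2; rewrite (sub_insc name Hms Hrim) !in_setD => /andP[_ K1I] /andP[_ K2I].
  exact: Hinj.
- rewrite /approx !pattern_red -Ec'; exists 0; rewrite !rot0.
  by case: Hm => ->; [left|right].
Qed.
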